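(* Let $R$ be the ring of upper triangular $2\times 2$ matrices over the field $\mathbb{F}_3$ (a non-commutative ring with unity of order $27$ having exactly $15$ zero-divisors, counting $0$). Consider the (left) projective line $P(R)$. Then: (i) $P(R)$ has exactly $48$ points; (ii) exactly $42$ of these points have a representative pair $(a,b)$ in which $a$ or $b$ is a unit of $R$; (iii) every point of $P(R)$ has exactly $20$ neighbours other than itself; (iv) any two distant points of $P(R)$ have exactly $6$ common neighbours; (v) any three pairwise distant points of $P(R)$ have no common neighbour; (vi) the maximum cardinality of a set of pairwise distant points of $P(R)$ is $4$. *)

(* Defs.v *)
From mathcomp Require Import all_boot all_algebra.
Set Implicit Arguments. Unset Strict Implicit. Unset Printing Implicit Defensive.
Import GRing.Theory.
Local Open Scope ring_scope.

Definition M := 'M['F_3]_2.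

Definition inR (A : M) : bool := A ord_max ord0 == 0.
Definition Rset : {set M} := [set A : M | inR A].

Definition unitR (a : M) : bool :=
  inR a && [exists b : M, [&& inR b, a * b == 1 & b * a == 1]].

(* 2x2 matrices over R, written as quadruples (a, b, c, d) = [[a, b], [c, d]]. *)
Definition mat2 : Type := (M * M * M * M)%type.
Definition inR2 (X : mat2) : bool :=
  let: (a, b, c, d) := X in [&& inR a, inR b, inR c & inR d].
Definition mul2 (X Y : mat2) : mat2 :=
  let: (a, b, c, d) := X in let: (e, f, g, h) := Y in
  (a * e + b * g, a * f + b * h, c * e + d * g, c * f + d * h).
Definition id2 : mat2 := (1, 0, 0, 1).
Definition GL2R (X : mat2) : bool :=
  inR2 X && [exists Y : mat2, [&& inR2 Y, mul2 X Y == id2 & mul2 Y X == id2]].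

Definition admissible (x : M * M) : bool :=
  [exists y : M * M, GL2R (x.1, x.2, y.1, y.2)].

Definition Rspan (x : M * M) : {set M * M} :=
  [set (r * x.1, r * x.2) | r in Rset].

Definition points : {set {set M * M}} :=
  [set Rspan x | x in [set x : M * M | admissible x]].

Definition distant (p q : {set M * M}) : bool :=
  [exists x : M * M, exists y : M * M,
     [&& admissible x, admissible y, p == Rspan x, q == Rspan y
       & GL2R (x.1, x.2, y.1, y.2)]].

Definition neighbour (p q : {set M * M}) : bool := ~~ distant p q.

(* Main.v *)
Require Import Defs.
From mathcomp Require Import all_boot all_algebra.
From mathcomp Require Import ring zify.
Set Implicit Arguments. Unset Strict Implicit. Unset Printing Implicit Defensive.
Import GRing.Theory.
Local Open Scope ring_scope.

Definition T3 := ('F_3 * 'F_3 * 'F_3)%type.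
Definition enc (t : T3) : M := \matrix_(i < 2, j < 2)
  if (i : nat) == 0%N then (if (j : nat) == 0%N then t.1.1 else t.1.2)
  else (if (j : nat) == 0%N then 0 else t.2).
Definition dec (A : M) : T3 := (A ord0 ord0, A ord0 ord_max, A ord_max ord_max).
Lemma F3lt (m : nat) : (m %% 3 < (Zp_trunc (pdiv 3)).+2)%N.
Proof. by rewrite ltn_mod. Qed.
Definition mk (m : nat) : 'F_3 := Ordinal (F3lt m).
Definition fmul (x y : 'F_3) : 'F_3 := mk (val x * val y).
Definition fadd (x y : 'F_3) : 'F_3 := mk (val x + val y).
Definition fsub (x y : 'F_3) : 'F_3 := mk (val x + 2 * val y).
Lemma fmulE x y : fmul x y = x * y. Proof. by apply: val_inj. Qed.
Lemma faddE x y : fadd x y = x + y. Proof. by apply: val_inj. Qed.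
Lemma fsubE x y : fsub x y = x - y.
Proof.
apply: val_inj; case: x => [[|[|[|//]]] ?]; case: y => [[|[|[|//]]] ?]; by [].
Qed.
Definition mulc (t u : T3) : T3 :=
  (fmul t.1.1 u.1.1, fadd (fmul t.1.1 u.1.2) (fmul t.1.2 u.2), fmul t.2 u.2).
Definition addc (t u : T3) : T3 :=
  (fadd t.1.1 u.1.1, fadd t.1.2 u.1.2, fadd t.2 u.2).

Lemma ord2P (i : 'I_2) : i = ord0 \/ i = ord_max.
Proof. case: i => [[|[|//]]] H; [left|right]; exact: val_inj. Qed.

Lemma encK t : dec (enc t) = t.
Proof. by case: t => [[a b] c]; rewrite /dec !mxE. Qed.
Lemma enc_inj : injective enc.
Proof. by move=> t u H; rewrite -(encK t) H encK. Qed.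
Lemma enc_inR t : inR (enc t).
Proof. by rewrite /inR mxE. Qed.
Lemma decK A : inR A -> enc (dec A) = A.
Proof.
move=> /eqP H; apply/matrixP => i j; rewrite mxE.
by case: (ord2P i) => ->; case: (ord2P j) => ->.
Qed.
Lemma encM t u : enc t * enc u = enc (mulc t u).
Proof.
apply/matrixP => i j; rewrite !mxE !big_ord_recl big_ord0 !mxE.
case: t => [[a b] c]; case: u => [[a' b'] c'].
by rewrite /mulc /addc ?fmulE ?faddE; case: (ord2P i) => ->; case: (ord2P j) => -> /=; ring.
Qed.
Lemma encD t u : enc t + enc u = enc (addc t u).
Proof.
apply/matrixP => i j; rewrite !mxE.
case: t => [[a b] c]; case: u => [[a' b'] c'].
by rewrite /mulc /addc ?fmulE ?faddE; case: (ord2P i) => ->; case: (ord2P j) => -> /=; ring.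
Qed.
Lemma enc1 : enc (1, 0, 1) = 1.
Proof.
apply/matrixP => i j; rewrite !mxE.
by case: (ord2P i) => ->; case: (ord2P j) => -> /=.
Qed.
Lemma enc0 : enc (0, 0, 0) = 0.
Proof.
apply/matrixP => i j; rewrite !mxE.
by case: (ord2P i) => ->; case: (ord2P j) => -> /=.
Qed.
Definition Q := (T3 * T3 * T3 * T3)%type.
Definition encq (X : Q) : mat2 := (enc X.1.1.1, enc X.1.1.2, enc X.1.2, enc X.2).
Definition mulq (X Y : Q) : Q :=
  let: (a, b, c, d) := X in let: (e, f, g, h) := Y in
  (addc (mulc a e) (mulc b g), addc (mulc a f) (mulc b h),
   addc (mulc c e) (mulc d g), addc (mulc c f) (mulc d h)).
Definition idq : Q := ((1,0,1), (0,0,0), (0,0,0), (1,0,1)).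
Lemma mul2_enc X Y : mul2 (encq X) (encq Y) = encq (mulq X Y).
Proof.
by case: X => [[[a b] c] d]; case: Y => [[[e f] g] h]; rewrite /mul2 /= !encM !encD.
Qed.
Lemma id2_enc : id2 = encq idq.
Proof. by rewrite /encq /= enc1 enc0. Qed.
Lemma encq_inj : injective encq.
Proof.
case=> [[[a b] c] d]; case=> [[[e f] g] h] /= [].
by move=> /enc_inj-> /enc_inj-> /enc_inj-> /enc_inj->.
Qed.

Definition detok (x y : T3 * T3) : bool :=
  (fsub (fmul x.1.1.1 y.2.1.1) (fmul x.2.1.1 y.1.1.1) != 0) &&
  (fsub (fmul x.1.2 y.2.2) (fmul x.2.2 y.1.2) != 0).

Definition invq (X : Q) : Q :=
  let: ((a0, an, a1), (b0, bn, b1), (c0, cn, c1), (d0, dn, d1)) := X in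
  let i1 := (a0 * d0 - b0 * c0)^-1 in
  let i2 := (a1 * d1 - b1 * c1)^-1 in
  let y00 := i1 * d0 in let y01 := - (i1 * b0) in
  let y10 := - (i1 * c0) in let y11 := i1 * a0 in
  let z00 := i2 * d1 in let z01 := - (i2 * b1) in
  let z10 := - (i2 * c1) in let z11 := i2 * a1 in
  let m00 := y00 * an + y01 * cn in let m01 := y00 * bn + y01 * dn in
  let m10 := y10 * an + y11 * cn in let m11 := y10 * bn + y11 * dn in
  let n00 := - (m00 * z00 + m01 * z10) in let n01 := - (m00 * z01 + m01 * z11) in
  let n10 := - (m10 * z00 + m11 * z10) in let n11 := - (m10 * z01 + m11 * z11) in
  ((y00, n00, z00), (y01, n01, z01), (y10, n10, z10), (y11, n11, z11)).

Lemma invq_ok X : detok (X.1.1.1, X.1.1.2) (X.1.2, X.2) ->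
  mulq X (invq X) = idq /\ mulq (invq X) X = idq.
Proof.
case: X => [[[[[a0 an] a1] [[b0 bn] b1]] [[c0 cn] c1]] [[d0 dn] d1]].
rewrite /detok; cbv beta iota zeta delta [fst snd]; rewrite !fsubE !fmulE => /andP [Hd1 Hd2].
split;
  rewrite /mulq /invq /addc /mulc /idq; cbv beta iota zeta delta [fst snd];
  rewrite ?fmulE ?faddE; repeat match goal with |- (_, _) = (_, _) => f_equal end; field; rewrite ?Hd1 ?Hd2 //.
Qed.

Lemma GL2R_enc X :
  GL2R (encq X) = detok (X.1.1.1, X.1.1.2) (X.1.2, X.2).
Proof.
apply/idP/idP.
  case/andP=> _ /existsP [Y /and3P [HY /eqP H1 _]].
  have EY : Y = encq (dec Y.1.1.1, dec Y.1.1.2, dec Y.1.2, dec Y.2).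
    move: HY; case: Y {H1} => [[[e f] g] h] /= /and4P [He Hf Hg Hh].
    by rewrite /encq /= !decK.
  move: H1; rewrite EY mul2_enc id2_enc => /encq_inj.
  case: X => [[[[[a0 an] a1] [[b0 bn] b1]] [[c0 cn] c1]] [[d0 dn] d1]].
  case: (dec Y.1.1.1) => [[e0 en] e1]; case: (dec Y.1.1.2) => [[f0 fn] f1].
  case: (dec Y.1.2) => [[g0 gn] g1]; case: (dec Y.2) => [[h0 hn] h1].
  rewrite /mulq /addc /mulc; move=> H.
  have E1 : fadd (fmul a0 e0) (fmul b0 g0) = 1 := congr1 (fun X : Q => X.1.1.1.1.1) H.
  have E2 : fadd (fmul a1 e1) (fmul b1 g1) = 1 := congr1 (fun X : Q => X.1.1.1.2) H.
  have E3 : fadd (fmul a0 f0) (fmul b0 h0) = 0 := congr1 (fun X : Q => X.1.1.2.1.1) H.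
  have E4 : fadd (fmul a1 f1) (fmul b1 h1) = 0 := congr1 (fun X : Q => X.1.1.2.2) H.
  have E5 : fadd (fmul c0 e0) (fmul d0 g0) = 0 := congr1 (fun X : Q => X.1.2.1.1) H.
  have E6 : fadd (fmul c1 e1) (fmul d1 g1) = 0 := congr1 (fun X : Q => X.1.2.2) H.
  have E7 : fadd (fmul c0 f0) (fmul d0 h0) = 1 := congr1 (fun X : Q => X.2.1.1) H.
  have E8 : fadd (fmul c1 f1) (fmul d1 h1) = 1 := congr1 (fun X : Q => X.2.2) H.
  rewrite !fmulE !faddE in E1 E2 E3 E4 E5 E6 E7 E8.
  rewrite /detok; cbv beta iota zeta delta [fst snd]; rewrite !fsubE !fmulE; apply/andP; split; apply/eqP => E.
  - have : (a0 * d0 - b0 * c0) * (e0 * h0 - f0 * g0) = 1.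
      transitivity ((a0 * e0 + b0 * g0) * (c0 * f0 + d0 * h0) - (a0 * f0 + b0 * h0) * (c0 * e0 + d0 * g0)); first by ring.
      by rewrite E1 E3 E5 E7; ring.
    by rewrite E mul0r => /eqP; rewrite eq_sym oner_eq0.
  - have : (a1 * d1 - b1 * c1) * (e1 * h1 - f1 * g1) = 1.
      transitivity ((a1 * e1 + b1 * g1) * (c1 * f1 + d1 * h1) - (a1 * f1 + b1 * h1) * (c1 * e1 + d1 * g1)); first by ring.
      by rewrite E2 E4 E6 E8; ring.
    by rewrite E mul0r => /eqP; rewrite eq_sym oner_eq0.
move=> Hd.
apply/andP; split.
  by case: X {Hd} => [[[a b] c] d]; rewrite /encq /inR2 /= !enc_inR.
apply/existsP; exists (encq (invq X)).
have [H1 H2] := invq_ok Hd.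
rewrite !mul2_enc H1 H2 -id2_enc eqxx !andbT.
by case: (invq X) => [[[a b] c] d]; rewrite /encq /inR2 /= !enc_inR.
Qed.

Definition P2 := (T3 * T3)%type.
Definition encp (x : P2) : M * M := (enc x.1, enc x.2).
Definition mulpc (t : T3) (x : P2) : P2 := (mulc t x.1, mulc t x.2).
Definition unitc (t : T3) : bool := (t.1.1 != 0) && (t.2 != 0).
Definition one3 : T3 := (mk 1, mk 0, mk 1).
Lemma one3E : one3 = (1, 0, 1).
Proof. by rewrite /one3; congr (_, _, _); apply: val_inj. Qed.

Definition F3s : seq 'F_3 := [:: mk 0; mk 1; mk 2].
Definition T3s : seq T3 :=
  [seq (xy, z) | xy <- [seq (x, y) | x <- F3s, y <- F3s], z <- F3s].
Definition Ps : seq P2 := [seq (x, y) | x <- T3s, y <- T3s].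

Lemma memF3 (x : 'F_3) : x \in F3s.
Proof. by case: x => [[|[|[|//]]] H]; rewrite /F3s !inE; apply/orP;
  [left|right; apply/orP; left|right; apply/orP; right]; apply/eqP/val_inj. Qed.
Lemma memT3 (t : T3) : t \in T3s.
Proof. by case: t => [[x y] z]; apply: allpairs_f; [apply: allpairs_f|]; apply: memF3. Qed.
Lemma memPs (x : P2) : x \in Ps.
Proof. by case: x => a b; apply: allpairs_f; apply: memT3. Qed.

Lemma GL2R_encp cx cy :
  GL2R ((encp cx).1, (encp cx).2, (encp cy).1, (encp cy).2) = detok cx cy.
Proof. by have := GL2R_enc (cx.1, cx.2, cy.1, cy.2); case: cx cy => [a b] [c d]. Qed.

Lemma inR_mul a b : inR a -> inR b -> inR (a * b).
Proof. by move=> /decK <- /decK <-; rewrite encM enc_inR. Qed.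
Lemma inR1 : inR 1.
Proof. by rewrite -enc1 enc_inR. Qed.

Lemma self_Rspan x : x \in Rspan x.
Proof. apply/imsetP; exists 1; first by rewrite inE inR1. by rewrite !mul1r; case: x. Qed.

Lemma Rspan_sub r x : inR r -> Rspan (r * x.1, r * x.2) \subset Rspan x.
Proof.
move=> Hr; apply/subsetP => z /imsetP [s Hs ->]; apply/imsetP; exists (s * r).
  by move: Hs; rewrite !inE => Hs; apply: inR_mul.
by rewrite /= !mulrA.
Qed.

Lemma Rspan_unit r s x : inR r -> inR s -> s * r = 1 ->
  Rspan (r * x.1, r * x.2) = Rspan x.
Proof.
move=> Hr Hs Hsr; apply/eqP; rewrite eqEsubset Rspan_sub //=.
have H := Rspan_sub (r * x.1, r * x.2) Hs.
rewrite /= !mulrA Hsr !mul1r in H.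
by case: x H.
Qed.

Lemma encp_mul t cx : encp (mulpc t cx) = (enc t * (encp cx).1, enc t * (encp cx).2).
Proof. by rewrite /encp /= !encM. Qed.

Lemma memRspan cx z : z \in Rspan (encp cx) -> exists t, z = encp (mulpc t cx).
Proof.
move=> /imsetP [r Hr ->]; exists (dec r).
rewrite encp_mul decK //; by move: Hr; rewrite inE.
Qed.

Lemma mulpc_Rspan t cx : encp (mulpc t cx) \in Rspan (encp cx).
Proof. rewrite encp_mul; apply/imsetP; exists (enc t) => //; by rewrite inE enc_inR. Qed.

Lemma encp_inj : injective encp.
Proof. by case=> a b [c d] [] /enc_inj -> /enc_inj ->. Qed.

Lemma GL2R_inR X : GL2R X -> inR2 X.
Proof. by case/andP. Qed.

Definition admc (cx : P2) : bool := has (detok cx) Ps.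

Lemma adm_R x : admissible x -> x = encp (dec x.1, dec x.2).
Proof.
move=> /existsP [y /GL2R_inR]; case: x y => [a b] [c d] /and4P [Ha Hb _ _].
by rewrite /encp /= !decK.
Qed.

Lemma adm_enc cx : admissible (encp cx) = admc cx.
Proof.
apply/idP/idP.
  move=> /existsP [y Hy]; apply/hasP; exists (dec y.1, dec y.2); first exact: memPs.
  have Ey : y = encp (dec y.1, dec y.2).
    move/GL2R_inR: Hy; case: y => [c d] /and4P [_ _ Hc Hd].
    by rewrite /encp /= !decK.
  by rewrite -GL2R_encp -Ey.
move=> /hasP [cy _ H]; apply/existsP; exists (encp cy); by rewrite GL2R_encp.
Qed.

Lemma unitR_enc t : unitR (enc t) = unitc t.
Proof.
apply/idP/idP.
  case/andP => _ /existsP [b /and3P [Hb /eqP H1 _]].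
  move: H1; rewrite -(decK Hb) encM -enc1 => /enc_inj.
  case: t => [[a0 an] a1]; case: (dec b) => [[b0 bn] b1] H.
  have E1 : fmul a0 b0 = 1 := congr1 (fun t : T3 => t.1.1) H.
  have E2 : fmul a1 b1 = 1 := congr1 (fun t : T3 => t.2) H.
  rewrite !fmulE in E1 E2.
  rewrite /unitc /=; apply/andP; split; apply/eqP => E.
    by move: E1; rewrite E mul0r => /eqP; rewrite eq_sym oner_eq0.
  by move: E2; rewrite E mul0r => /eqP; rewrite eq_sym oner_eq0.
move=> Hu.
have CF : all (fun u => unitc u ==> has (fun v => (mulc v u == one3) && (mulc u v == one3)) T3s) T3s.
  by vm_compute; reflexivity.
move: (allP CF t (memT3 t)); rewrite Hu => /hasP [v _ /andP [/eqP H1 /eqP H2]].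
rewrite /unitR enc_inR; apply/existsP; exists (enc v).
by rewrite enc_inR !encM H1 H2 one3E enc1 !eqxx.
Qed.

Definition lineL (i : nat) : 'F_3 * 'F_3 :=
  match i with 0%N => (mk 1, mk 0) | 1%N => (mk 1, mk 1) | 2%N => (mk 1, mk 2) | _ => (mk 0, mk 1) end.
Definition rep (n : nat) : P2 :=
  let: (p, q) := lineL (n %/ 12)%N in
  let: (s, t) := lineL ((n %/ 3) %% 4)%N in
  let r : 'F_3 := mk n in
  if (val s == 1)%N then ((p, mk 0, s), (q, r, t)) else ((p, r, s), (q, mk 0, t)).
Definition f (k : 'I_48) : {set M * M} := Rspan (encp (rep k)).
Definition idx := iota 0 48.

Lemma CF1 : all (fun n => admc (rep n)) idx.
Proof. vm_compute. reflexivity. Qed.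
Definition Us := filter unitc T3s.
Lemma CF2 : let L := [seq mulpc u (rep n) | n <- idx, u <- Us] in all (fun cx => admc cx ==> (cx \in L)) Ps.
Proof. vm_compute. reflexivity. Qed.
Lemma CF3 : all (fun n => all (fun m => (n != m) ==> ~~ has (fun t => mulpc t (rep n) == rep m) T3s) idx) idx.
Proof. vm_compute. reflexivity. Qed.
Lemma CFinv : all (fun u => unitc u ==> has (fun v => (mulc v u == one3) && (mulc u v == one3)) T3s) T3s.
Proof. vm_compute. reflexivity. Qed.

Lemma memidx (k : 'I_48) : (k : nat) \in idx.
Proof. by rewrite /idx mem_iota leq0n add0n ltn_ord. Qed.

Lemma f_points k : f k \in points.
Proof.
apply/imsetP; exists (encp (rep k)) => //.
by rewrite inE adm_enc (allP CF1 _ (memidx k)).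
Qed.

Lemma unit_Rspan u cx : unitc u -> Rspan (encp (mulpc u cx)) = Rspan (encp cx).
Proof.
move=> Hu; move: (allP CFinv u (memT3 u)); rewrite Hu => /hasP [v _ /andP [/eqP H1 _]].
rewrite encp_mul (@Rspan_unit (enc u) (enc v)) ?enc_inR //.
by rewrite encM H1 one3E enc1.
Qed.

Lemma points_surj p : p \in points -> exists k : 'I_48, p = f k.
Proof.
move=> /imsetP [x]; rewrite inE => Hx ->.
have Ex := adm_R Hx; set cx := (dec x.1, dec x.2) in Ex.
move: Hx; rewrite Ex adm_enc => Ha.
move: (allP CF2 cx (memPs cx)); rewrite Ha => /allpairsP [[n u] /= [Hn Hu E]].
move: Hu; rewrite mem_filter => /andP [Hu _].
have Hn' : (n < 48)%N by move: Hn; rewrite /idx mem_iota.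
exists (Ordinal Hn'); by rewrite /f /= E unit_Rspan.
Qed.

Lemma f_inj : injective f.
Proof.
move=> k k' E.
have : encp (rep k') \in f k by rewrite E; apply: self_Rspan.
move=> /memRspan [t /encp_inj Et].
apply/val_inj/eqP; apply/negPn/negP => Hne.
move: (allP (allP CF3 _ (memidx k)) _ (memidx k')); rewrite Hne implyTb => /negP; apply; apply/hasP.
by exists t; [apply: memT3 | rewrite Et].
Qed.

Definition dn (n m : nat) : bool :=
  (n %/ 12 != m %/ 12)%N && ((n %/ 3) %% 4 != (m %/ 3) %% 4)%N.

Lemma CFd : all (fun n => all (fun m => detok (rep n) (rep m) == dn n m) idx) idx.
Proof. vm_compute. reflexivity. Qed.

Lemma detok_mul t s a b : detok (mulpc t a) (mulpc s b) -> detok a b.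
Proof.
case: t => [[t0 tn] t1]; case: s => [[s0 sn] s1].
case: a => [[[a0 an] a1] [[b0 bn] b1]]; case: b => [[[c0 cn] c1] [[d0 dn'] d1]].
rewrite /detok /mulpc /mulc; cbv beta iota zeta delta [fst snd].
rewrite !fsubE !fmulE => /andP [H1 H2]; apply/andP; split; apply/eqP => E.
  move/eqP: H1; apply; transitivity (t0 * s0 * (a0 * d0 - b0 * c0)); first by ring.
  by rewrite E mulr0.
move/eqP: H2; apply; transitivity (t1 * s1 * (a1 * d1 - b1 * c1)); first by ring.
by rewrite E mulr0.
Qed.

Lemma distant_f k k' : distant (f k) (f k') = dn k k'.
Proof.
rewrite -(eqP (allP (allP CFd _ (memidx k)) _ (memidx k'))).
apply/idP/idP.
  case/existsP => x /existsP [y /and5P [Hx Hy /eqP Ex /eqP Ey HG]].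
  have : x \in f k by rewrite Ex; apply: self_Rspan.
  move=> /memRspan [t Ext].
  have : y \in f k' by rewrite Ey; apply: self_Rspan.
  move=> /memRspan [s Eys].
  move: HG; rewrite Ext Eys GL2R_encp; exact: detok_mul.
move=> H; apply/existsP; exists (encp (rep k)); apply/existsP; exists (encp (rep k')).
by rewrite !eqxx GL2R_encp H !adm_enc !(allP CF1 _ (memidx _)).
Qed.

Definition unitk (cx : P2) : bool :=
  has (fun u => unitc u && (unitc (mulc u cx.1) || unitc (mulc u cx.2))) T3s.

Lemma unitc_mul t a : unitc (mulc t a) -> unitc t.
Proof.
case: t => [[t0 tn] t1]; case: a => [[a0 an] a1].
rewrite /unitc /mulc; cbv beta iota zeta delta [fst snd]; rewrite !fmulE.
by rewrite !mulf_eq0 !negb_or => /andP [/andP [-> _] /andP [-> _]].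
Qed.

Lemma unit_f k : [exists x : M * M, (f k == Rspan x) && (unitR x.1 || unitR x.2)]
  = unitk (rep k).
Proof.
apply/idP/idP.
  case/existsP => x /andP [/eqP E H].
  have : x \in f k by rewrite E; apply: self_Rspan.
  move=> /memRspan [t Ext]; move: H; rewrite Ext /= !unitR_enc => H.
  apply/hasP; exists t; first exact: memT3.
  rewrite H andbT; case/orP: H; exact: unitc_mul.
case/hasP => u _ /andP [Hu H]; apply/existsP; exists (encp (mulpc u (rep k))).
by rewrite /f unit_Rspan // eqxx /= !unitR_enc.
Qed.

Lemma transfer (P : {set M * M} -> bool) :
  [set q in points | P q] = f @: [set k | P (f k)].
Proof.
apply/setP => q; rewrite inE; apply/andP/imsetP.
  case=> Hq HP; have [k Ek] := points_surj Hq; exists k => //.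
  by rewrite inE -Ek.
case=> k; rewrite inE => HP ->; split => //; exact: f_points.
Qed.

Lemma card_count (b : nat -> bool) : #|[set k : 'I_48 | b k]| = count b idx.
Proof.
rewrite cardsE cardE /enum_mem size_filter /idx -val_enum_ord count_map enumT.
by apply: eq_count => k.
Qed.

Lemma card_transfer (P : {set M * M} -> bool) (b : nat -> bool) :
  (forall k : 'I_48, P (f k) = b k) ->
  #|[set q in points | P q]| = count b idx.
Proof.
move=> H; rewrite transfer (card_imset _ f_inj) -card_count.
by apply: eq_card => k; rewrite !inE H.
Qed.

Lemma CC3 : all (fun n => count (fun m => ~~ dn n m && (m != n)) idx == 20)%N idx.
Proof. vm_compute. reflexivity. Qed.
Lemma CC4 : all (fun n => all (fun m => dn n m ==>
  (count (fun r => ~~ dn n r && ~~ dn m r) idx == 6)%N) idx) idx.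
Proof. vm_compute. reflexivity. Qed.
Lemma pig (a1 a2 a3 a b1 b2 b3 b : nat) : a1 != a2 -> a1 != a3 -> a2 != a3 ->
  b1 != b2 -> b1 != b3 -> b2 != b3 ->
  ~~ [&& (a1 == a) || (b1 == b), (a2 == a) || (b2 == b) & (a3 == a) || (b3 == b)].
Proof. move=> *; apply/negP => /and3P[]; lia. Qed.
Lemma CC2 : count (fun n => unitk (rep n)) idx = 42%N.
Proof. vm_compute. reflexivity. Qed.
Definition L4 := [:: 0; 15; 30; 45]%N.
Lemma CC6 : all (fun n => all (fun m => (n != m) ==> dn n m) L4) L4.
Proof. vm_compute. reflexivity. Qed.
Lemma CC7 : all (fun n => all (fun m => dn n m ==> (n %/ 12 != m %/ 12)%N) idx) idx.
Proof. vm_compute. reflexivity. Qed.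

Lemma dnE (k k' : 'I_48) : dn k k' -> (k %/ 12 != k' %/ 12)%N.
Proof. exact: (implyP (allP (allP CC7 _ (memidx k)) _ (memidx k'))). Qed.

Theorem mainTheorem2 :
  (* (i) *)
  #|points| = 48%N /\
  (* (ii) *)
  #|[set p in points | [exists x : M * M,
        (p == Rspan x) && (unitR x.1 || unitR x.2)]]| = 42%N /\
  (* (iii) *)
  (forall p, p \in points ->
     #|[set q in points | neighbour p q & q != p]| = 20%N) /\
  (* (iv) *)
  (forall p q, p \in points -> q \in points -> distant p q ->
     #|[set r in points | neighbour p r & neighbour q r]| = 6%N) /\
  (* (v) *)
  (forall p q s, p \in points -> q \in points -> s \in points ->
     distant p q -> distant p s -> distant q s ->
     forall r, r \in points -> ~~ [&& neighbour p r, neighbour q r & neighbour s r]) /\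
  (* (vi) *)
  (exists S : {set {set M * M}}, [/\ S \subset points,
      {in S &, forall p q, p != q -> distant p q} & #|S| = 4%N]) /\
  (forall S : {set {set M * M}}, S \subset points ->
      {in S &, forall p q, p != q -> distant p q} -> (#|S| <= 4)%N).
Proof.
split.
  have -> : points = [set q in points | true] by apply/setP => q; rewrite inE andbT.
  by rewrite (@card_transfer _ (fun _ => true)).
split.
  by rewrite (@card_transfer _ (fun n => unitk (rep n))) // => k; rewrite unit_f.
split.
  move=> p /points_surj [k ->].
  rewrite (@card_transfer _ (fun m => ~~ dn k m && (m != k))%N); last first.
    by move=> k'; rewrite /neighbour distant_f (inj_eq f_inj).
  exact: (eqP (allP CC3 _ (memidx k))).
split.
  move=> p q /points_surj [k ->] /points_surj [k' ->]; rewrite distant_f => Hd.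
  rewrite (@card_transfer _ (fun r => ~~ dn k r && ~~ dn k' r)); last first.
    by move=> r; rewrite /neighbour !distant_f.
  by have := allP (allP CC4 _ (memidx k)) _ (memidx k'); rewrite Hd => /eqP.
split.
  move=> p q s /points_surj [k ->] /points_surj [k' ->] /points_surj [l ->].
  rewrite !distant_f => H1 H2 H3 r /points_surj [m ->].
  rewrite /neighbour !distant_f.
  have E x y : ~~ dn x y = ((x %/ 12 == y %/ 12) || ((x %/ 3) %% 4 == (y %/ 3) %% 4))%N.
    by rewrite /dn negb_and !negbK.
  rewrite !E.
  move: H1 H2 H3; rewrite /dn => /andP [? ?] /andP [? ?] /andP [? ?].
  by apply: pig.
split.
  exists (f @: [set k : 'I_48 | (k : nat) \in L4]); split.
  - by apply/subsetP => p /imsetP [k _ ->]; apply: f_points.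
  - move=> p q /imsetP [k Hk ->] /imsetP [k' Hk' ->] Hne.
    rewrite distant_f; move: Hk Hk'; rewrite !in_set => Hk Hk'.
    have Hkk : (k : nat) != k' by apply: contraNneq Hne => /val_inj ->.
    by move: (allP (allP CC6 _ Hk) _ Hk'); rewrite Hkk.
  - by rewrite (card_imset _ f_inj) card_count.
move=> S HS Hd.
set S' := [set k | f k \in S].
have ES : S = f @: S'.
  apply/setP => q; apply/idP/imsetP.
    move=> Hq; have [k Ek] := points_surj (subsetP HS _ Hq).
    by exists k => //; rewrite inE -Ek.
  by case=> k; rewrite inE => Hk ->.
rewrite ES (card_imset _ f_inj).
pose g (k : 'I_48) : 'I_4 := inord (k %/ 12).
have lt4 (k : 'I_48) : (k %/ 12 < 4)%N by rewrite ltn_divLR.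
have Hg : {in S' &, injective g}.
  move=> k k'; rewrite !inE => Hk Hk' Eg.
  apply/eqP; apply/negPn/negP => Hne.
  have Hfne : f k != f k' by rewrite (inj_eq f_inj).
  move: (Hd _ _ Hk Hk' Hfne); rewrite distant_f => /dnE.
  move: Eg => /(congr1 val); rewrite /g /= !inordK ?lt4 // => ->.
  by rewrite eqxx.
rewrite -(card_in_imset Hg).
by apply: leq_trans (max_card _) _; rewrite card_ord.
Qed.
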